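(* There is no class $\mathcal C$ of pWF nets satisfying all three of the following: (1) every sub-sound pWF net belongs to $\mathcal C$, and $\mathcal C$ contains at least one pWF net that is not sub-sound; (2) every net in $\mathcal C$ is $1$-sound; (3) $\mathcal C$ is preserved by substitution, i.e. whenever $N,M\in\mathcal C$ have disjoint node sets and $p$ is a place of $N$, then $N\otimes_p M\in\mathcal C$.
   Context: Petri nets and markings. A Petri net is a triple $(P,T,F)$ with $P$ a finite set of places, $T$ a finite set of transitions, $P\cap T=\emptyset$, and $F\subseteq (P\times T)\cup(T\times P)$. For a node $x$, $\bullet x=\{y\mid (y,x)\in F\}$, $x\bullet=\{y\mid (x,y)\in F\}$. A marking is a multiset over $P$ (a function $P\to\mathbb N$); sets of places are identified with bags of multiplicity one, $+,-,\le$ are pointwise, and $k.m$ is the sum of $k$ copies of $m$. Transition $t$ is enabled at $m$ iff $\bullet t\le m$, firing gives $m-\bullet t+t\bullet$, and $m\xrightarrow{*}m'$ denotes reachability by a finite (possibly empty) firing sequence. A pWF net is $(P,T,F,I,O)$ with $(P,T,F)$ a Petri net, $I,O\subseteq P$ non-empty (input/output places), every node reachable by a directed path from some node of $I$, and some node of $O$ reachable from every node; input places may have incoming edges and output places outgoing edges. Soundness. A pWF net is $k$-sound if for every marking $m$ with $k.I\xrightarrow{*}m$ we have $m\xrightarrow{*}k.O$. It is substitution-sound (sub-sound) if for all integers $k\ge k'\ge 0$ and every marking $m'$: if $k.I\xrightarrow{*}m'+k'.O$ then $m'\xrightarrow{*}(k-k').O$. Place substitution. For pWF nets $N=(P,T,F,I,O)$,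 $M=(P',T',F',I',O')$ with disjoint node sets and $p\in P$, $N\otimes_p M$ is obtained from $N$ by deleting $p$ and all edges incident to $p$, adding all nodes and edges of $M$, adding an edge $(t,p')$ for each $t\in\bullet_N p$ and $p'\in I'$, and an edge $(p',t)$ for each $p'\in O'$ and $t\in p\bullet_N$; its input set is $(I\setminus\{p\})\cup I'$ if $p\in I$ and $I$ otherwise, and its output set is $(O\setminus\{p\})\cup O'$ if $p\in O$ and $O$ otherwise. *)

(* Defs.v *)
(* Nodes of nets are drawn from the common universe nat
   (so "disjoint node sets" makes sense); sets of nodes / the flow relation
   are boolean predicates (finite, see [finite_net]). *)
From Stdlib Require Import Arith Bool Relations.

Record net := Net {
  pl   : nat -> bool;
  tr   : nat -> bool;
  fl   : nat -> nat -> bool;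
  inp  : nat -> bool;
  outp : nat -> bool
}.

Definition node (N : net) (x : nat) : bool := pl N x || tr N x.

Definition pWF (N : net) : Prop :=
  (exists b, forall x, node N x = true -> x < b) /\
  (forall x, ~ (pl N x = true /\ tr N x = true)) /\
  (forall x y, fl N x y = true ->
      (pl N x = true /\ tr N y = true) \/ (tr N x = true /\ pl N y = true)) /\
  (forall x, inp N x = true -> pl N x = true) /\
  (forall x, outp N x = true -> pl N x = true) /\
  (exists i, inp N i = true) /\
  (exists o, outp N o = true) /\
  (forall x, node N x = true ->
     exists i, inp N i = true /\ clos_refl_trans nat (fun a b => fl N a b = true) i x) /\
  (forall x, node N x = true ->
     exists o, outp N o = true /\ clos_refl_trans nat (fun a b => fl N a b = true) x o).

Definition marking := nat -> nat.

Definition madd (m1 m2 : marking) : marking := fun p => m1 p + m2 p.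

Definition mscale (k : nat) (S : nat -> bool) : marking :=
  fun p => if S p then k else 0.

Definition enabled (N : net) (t : nat) (m : marking) : Prop :=
  tr N t = true /\ forall p, fl N p t = true -> 1 <= m p.

Definition fire (N : net) (t : nat) (m : marking) : marking :=
  fun p => m p - (if fl N p t then 1 else 0) + (if fl N t p then 1 else 0).

Definition step (N : net) (m m' : marking) : Prop :=
  exists t, enabled N t m /\ m' = fire N t m.

Definition reach (N : net) : marking -> marking -> Prop :=
  clos_refl_trans marking (step N).

Definition ksound (k : nat) (N : net) : Prop :=
  forall m, reach N (mscale k (inp N)) m -> reach N m (mscale k (outp N)).

Definition subsound (N : net) : Prop :=
  forall k k' (m' : marking), k' <= k ->
    reach N (mscale k (inp N)) (madd m' (mscale k' (outp N))) ->
    reach N m' (mscale (k - k') (outp N)).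

Definition disjoint_nodes (N M : net) : Prop :=
  forall x, ~ (node N x = true /\ node M x = true).

Definition subst (N : net) (p : nat) (M : net) : net := {|
  pl := fun x => (pl N x && negb (x =? p)) || pl M x;
  tr := fun x => tr N x || tr M x;
  fl := fun x y =>
          (fl N x y && negb (x =? p) && negb (y =? p))
       || fl M x y
       || (fl N x p && inp M y)
       || (outp M x && fl N p y);
  inp := fun x => if inp N p then (inp N x && negb (x =? p)) || inp M x
                  else inp N x;
  outp := fun x => if outp N p then (outp N x && negb (x =? p)) || outp M x
                   else outp N x
|}.

(* Main.v *)
Require Import Defs.
From Stdlib Require Import Arith Bool Relations Lia List Classical FunctionalExtensionality.
Import ListNotations.

Ltac dec := repeat (match goal with
 | |- context [?a =? ?b] => destruct (Nat.eqb_spec a b)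
 | |- context [?a <=? ?b] => destruct (Nat.leb_spec a b)
 | |- context [?a <? ?b] => destruct (Nat.ltb_spec a b)
 | H : context [?a =? ?b] |- _ => destruct (Nat.eqb_spec a b)
 | H : context [?a <=? ?b] |- _ => destruct (Nat.leb_spec a b)
 | H : context [?a <? ?b] |- _ => destruct (Nat.ltb_spec a b)
 end; cbn [andb orb negb] in *; try (exfalso; lia)); try discriminate; try lia.

Lemma madd_comm m1 m2 : madd m1 m2 = madd m2 m1.
Proof. apply functional_extensionality; intro; unfold madd; lia. Qed.

Lemma fire_madd N t a R : (forall p, fl N p t = true -> 1 <= a p) ->
  fire N t (madd a R) = madd (fire N t a) R.
Proof.
  intro H; apply functional_extensionality; intro x; unfold fire, madd.
  destruct (fl N x t) eqn:E; [specialize (H x E)|]; destruct (fl N t x); lia.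
Qed.

Lemma step_madd N m1 m2 e : step N m1 m2 -> step N (madd m1 e) (madd m2 e).
Proof.
  intros [t [[Ht Hp] ->]]. exists t; split.
  - split; auto. intros p Hf; specialize (Hp p Hf); unfold madd; lia.
  - rewrite fire_madd; auto.
Qed.

Lemma reach_madd N m1 m2 e : reach N m1 m2 -> reach N (madd m1 e) (madd m2 e).
Proof.
  induction 1.
  - apply rt_step, step_madd; auto.
  - apply rt_refl.
  - eapply rt_trans; eauto.
Qed.

Lemma reach_maddl N m1 m2 e : reach N m1 m2 -> reach N (madd e m1) (madd e m2).
Proof. intro H; rewrite (madd_comm e m1), (madd_comm e m2); apply reach_madd; auto. Qed.

Definition Ch (B k : nat) : net := {|
 pl := fun x => ((B <=? x) && (x <=? B+2*k)) || (x =? B+4*k+1);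
 tr := fun x => (B+2*k <? x) && (x <=? B+4*k);
 fl := fun x y => ((B <=? x) && (x <? B+2*k) && (y =? x+2*k+1))
   || ((B+2*k <? x) && (x <=? B+4*k) && (y + 2*k =? x))
   || ((x =? B+4*k+1) && (B+3*k <? y) && (y <=? B+4*k))
   || ((B+2*k <? x) && (x <=? B+3*k) && (y =? B+4*k+1));
 inp := fun x => x =? B;
 outp := fun x => x =? B+2*k |}.

Definition tok B k j : marking := fun x =>
  (if x =? B+j then 1 else 0) + (if x =? B+4*k+1 then Nat.min j (2*k-j) else 0).

Lemma tok_step B k a : 1 <= k -> a < 2*k ->
  step (Ch B k) (tok B k a) (tok B k (S a)).
Proof.
  intros Hk Ha. exists (B+2*k+S a). split.
  - split. simpl. dec. intros p Hp. unfold tok. simpl in Hp. dec.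
  - apply functional_extensionality; intro x. unfold fire, tok; cbn [fl tr pl Ch]. dec.
Qed.


Lemma tok_fire B k a : a < 2*k ->
  fire (Ch B k) (B+2*k+S a) (tok B k a) = tok B k (S a).
Proof. intros Ha. apply functional_extensionality; intro x. unfold fire, tok; cbn [fl tr pl Ch]. dec. Qed.

Definition mk B k (l : list nat) : marking :=
  fold_right (fun a m => madd (tok B k a) m) (fun _ => 0) l.

Lemma mk_app_cons B k l1 a l2 : mk B k (l1 ++ a :: l2) = madd (tok B k a) (mk B k (l1 ++ l2)).
Proof.
  induction l1; simpl; auto. rewrite IHl1. apply functional_extensionality; intro; unfold madd; lia.
Qed.

Lemma mk_in B k l j : 1 <= mk B k l (B+j) -> j <> 4*k+1 -> In j l.
Proof.
  induction l; simpl; intros H Hj. lia.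
  unfold madd, tok at 1 in H. dec. right. apply IHl; auto; lia.
Qed.

Lemma step_inv B k l m : 1 <= k -> Forall (fun a => a <= 2*k) l -> step (Ch B k) (mk B k l) m ->
  exists l', m = mk B k l' /\ length l' = length l /\ Forall (fun a => a <= 2*k) l'.
Proof.
  intros Hk Hl [t [[Ht Hp] ->]].
  assert (Hti : exists i, t = B + 2*k + S i /\ i < 2*k) by (simpl in Ht; dec; exists (t - B - 2*k - 1); lia).
  destruct Hti as [i [-> Hi]].
  assert (Hin : In i l).
  { apply (mk_in B k). apply Hp. simpl; dec. lia. }
  destruct (in_split _ _ Hin) as [l1 [l2 ->]].
  exists (l1 ++ S i :: l2). rewrite !mk_app_cons. split; [|split].
  - rewrite fire_madd. rewrite tok_fire; auto.
    intros p Hf; unfold tok; simpl in Hf; dec.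
  - rewrite !length_app; simpl; lia.
  - apply Forall_app in Hl as [H1 H2]; inversion H2; subst. apply Forall_app; split; auto.
Qed.

Lemma reach_inv B k m1 m2 : 1 <= k -> reach (Ch B k) m1 m2 -> forall l, m1 = mk B k l ->
  Forall (fun a => a <= 2*k) l ->
  exists l', m2 = mk B k l' /\ length l' = length l /\ Forall (fun a => a <= 2*k) l'.
Proof.
  intros Hk; induction 1; intros l E Hl; subst.
  - eapply step_inv; eauto.
  - eauto.
  - destruct (IHclos_refl_trans1 l eq_refl Hl) as [l1 [E1 [L1 F1]]].
    destruct (IHclos_refl_trans2 l1 E1 F1) as [l2 [E2 [L2 F2]]].
    exists l2; repeat split; auto; lia.
Qed.

Lemma mk_repeat0 B k K : mscale K (inp (Ch B k)) = mk B k (repeat 0 K).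
Proof.
  induction K; simpl; apply functional_extensionality; intro x; unfold mscale; simpl.
  - destruct (x =? B); auto.
  - rewrite <- IHK. unfold madd, tok, mscale; simpl. dec.
Qed.

Lemma remove1 B k l m : Forall (fun a => a <= 2*k) l ->
  madd m (tok B k (2*k)) = mk B k l ->
  exists l2, m = mk B k l2 /\ S (length l2) = length l /\ Forall (fun a => a <= 2*k) l2.
Proof.
  intros Hl E.
  assert (Hin : In (2*k) l).
  { apply (mk_in B k); [|lia]. rewrite <- E. unfold madd, tok. dec. }
  destruct (in_split _ _ Hin) as [l1 [l2 ->]].
  exists (l1 ++ l2). rewrite mk_app_cons in E. split; [|split].
  - apply functional_extensionality; intro x. apply (f_equal (fun f => f x)) in E.
    unfold madd in E. lia.
  - rewrite !length_app; simpl; lia.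
  - apply Forall_app in Hl as [H1 H2]; inversion H2; subst. apply Forall_app; split; auto.
Qed.

Lemma remove B k n : forall l m, Forall (fun a => a <= 2*k) l ->
  madd m (mscale n (outp (Ch B k))) = mk B k l ->
  exists l2, m = mk B k l2 /\ length l2 + n = length l /\ Forall (fun a => a <= 2*k) l2.
Proof.
  induction n; intros l m Hl E.
  - exists l; split; auto. rewrite <- E. apply functional_extensionality; intro x.
    unfold madd, mscale. destruct (outp _ x); lia.
  - destruct (IHn l (madd m (tok B k (2*k))) Hl) as [l1 [E1 [L1 F1]]].
    + rewrite <- E. apply functional_extensionality; intro x. unfold madd, mscale, tok; simpl. dec.
    + destruct (remove1 B k l1 m F1 E1) as [l2 [E2 [L2 F2]]].
      exists l2; repeat split; auto; lia.
Qed.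

Lemma tok_reach B k a : 1 <= k -> a <= 2*k -> reach (Ch B k) (tok B k a) (tok B k (2*k)).
Proof.
  intros Hk Ha. remember (2*k - a) as d. revert a Ha Heqd. induction d; intros a Ha Hd.
  - assert (a = 2*k) by lia; subst; apply rt_refl.
  - eapply rt_trans. apply rt_step, tok_step; lia. apply IHd; lia.
Qed.

Lemma complete B k l : 1 <= k -> Forall (fun a => a <= 2*k) l ->
  reach (Ch B k) (mk B k l) (mscale (length l) (outp (Ch B k))).
Proof.
  intros Hk; induction l; intros Hl; simpl.
  - replace (mscale 0 _) with (fun _ : nat => 0). apply rt_refl.
    apply functional_extensionality; intro x; unfold mscale; simpl; destruct (_ =? _); auto.
  - inversion Hl; subst. eapply rt_trans.
    apply reach_madd. apply tok_reach; eauto.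
    replace (mscale (S (length l)) _) with (madd (tok B k (2*k)) (mscale (length l) (outp (Ch B k)))).
    apply reach_maddl; auto.
    apply functional_extensionality; intro x. unfold madd, mscale, tok; simpl. dec.
Qed.

Lemma Ch_subsound B k : 1 <= k -> subsound (Ch B k).
Proof.
  intros Hk K k' m' Hle Hr.
  rewrite mk_repeat0 in Hr.
  destruct (reach_inv B k _ _ Hk Hr (repeat 0 K) eq_refl) as [l [E [L F]]].
  { apply Forall_forall; intros x Hx; apply repeat_spec in Hx; lia. }
  rewrite repeat_length in L.
  destruct (remove B k k' l m' F E) as [l2 [E2 [L2 F2]]]. subst m'.
  replace (K - k') with (length l2) by lia. apply complete; auto.
Qed.


Definition Rf N := clos_refl_trans nat (fun a b => fl N a b = true).

Lemma edge N a b : fl N a b = true -> Rf N a b.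
Proof. intro; apply rt_step; auto. Qed.

Lemma fwd_c B k j : j <= 2*k -> Rf (Ch B k) B (B+j).
Proof.
  induction j; intro Hj.
  - replace (B+0) with B by lia; apply rt_refl.
  - eapply rt_trans. apply IHj; lia.
    eapply rt_trans. apply (edge _ _ (B+2*k+S j)). simpl; dec.
    apply edge; simpl; dec.
Qed.

Lemma c_out B k j : j <= 2*k -> Rf (Ch B k) (B+j) (B+2*k).
Proof.
  intros Hj. remember (2*k - j) as d. revert j Hj Heqd. induction d; intros j Hj Hd.
  - replace j with (2*k) by lia; apply rt_refl.
  - eapply rt_trans. apply (edge _ _ (B+2*k+S j)). simpl; dec.
    eapply rt_trans. apply (edge _ _ (B + S j)). simpl; dec.
    apply IHd; lia.
Qed.

Lemma Ch_pWF B k : 1 <= k -> pWF (Ch B k).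
Proof.
  intros Hk. unfold pWF; repeat split.
  - exists (B+4*k+2). intros x Hx. unfold node in Hx; simpl in Hx; dec.
  - intros x [H1 H2]. simpl in *. dec.
  - intros x y H. simpl in *. dec; auto.
  - intros x H; simpl in *; dec.
  - intros x H; simpl in *; dec.
  - exists B; simpl; dec.
  - exists (B+2*k); simpl; dec.
  - intros x Hx. exists B; split. simpl; dec.
    unfold node in Hx; simpl in Hx.
    destruct ((B <=? x) && (x <=? B+2*k)) eqn:E1.
    + replace x with (B + (x - B)) by (dec). apply fwd_c. dec.
    + destruct (x =? B+4*k+1) eqn:E2.
      * apply Nat.eqb_eq in E2; subst. eapply rt_trans. apply (fwd_c B k 0); lia.
        eapply rt_trans. apply (edge _ _ (B+2*k+1)). simpl; dec. apply edge; simpl; dec.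
      * simpl in Hx. eapply rt_trans. apply (fwd_c B k (x - B - 2*k - 1)). dec.
        apply edge; simpl; dec.
  - intros x Hx. exists (B+2*k); split. simpl; dec.
    unfold node in Hx; simpl in Hx.
    destruct ((B <=? x) && (x <=? B+2*k)) eqn:E1.
    + replace x with (B + (x - B)) by (dec). apply c_out. dec.
    + destruct (x =? B+4*k+1) eqn:E2.
      * apply Nat.eqb_eq in E2; subst.
        eapply rt_trans. apply (edge _ _ (B+4*k)). simpl; dec. apply edge; simpl; dec.
      * simpl in Hx. eapply rt_trans. apply (edge _ _ (B + (x - B - 2*k))). simpl; dec.
        apply c_out; dec.
Qed.


Definition inner (N : net) (B : nat) : Prop :=
 (forall x y, fl N x y = true -> x < B /\ y < B) /\
 (forall x, inp N x = true -> x < B /\ tr N x = false) /\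
 (forall x, outp N x = true -> x < B /\ tr N x = false) /\
 (forall x, node N x = true -> x < B).

Lemma pWF_inner N : pWF N -> exists B, inner N B.
Proof.
  intros [[b Hb] [Hd [Hf [Hi [Ho _]]]]]. exists b. unfold node in *. repeat split.
  - destruct (Hf _ _ H) as [[A _]|[A _]]; apply Hb; rewrite A; auto using orb_true_r.
  - destruct (Hf _ _ H) as [[_ A]|[_ A]]; apply Hb; rewrite A; auto using orb_true_r.
  - apply Hb. rewrite Hi; auto.
  - destruct (tr N x) eqn:E; auto. exfalso; apply (Hd x); auto.
  - apply Hb. rewrite Ho; auto.
  - destruct (tr N x) eqn:E; auto. exfalso; apply (Hd x); auto.
  - auto.
Qed.

Ltac atoms H0fl H0in H0out :=
  repeat match goal with
  | |- context [fl ?N ?a ?b] => is_var N; let E := fresh "E" in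
      destruct (fl N a b) eqn:E; [apply H0fl in E; destruct E|]
  | |- context [inp ?N ?a] => is_var N; let E := fresh "E" in
      destruct (inp N a) eqn:E; [apply H0in in E; destruct E|]
  | |- context [outp ?N ?a] => is_var N; let E := fresh "E" in
      destruct (outp N a) eqn:E; [apply H0out in E; destruct E|]
  end.

Definition Sn N0 B k := subst (Ch B k) (B+4*k+1) N0.


Lemma flS_N0 N0 B k t : inner N0 B -> tr N0 t = true ->
  forall x, fl (Sn N0 B k) x t = fl N0 x t /\ fl (Sn N0 B k) t x = fl N0 t x.
Proof.
  intros [H0fl [H0in [H0out H0n]]] Ht x.
  assert (tB : t < B) by (apply H0n; unfold node; rewrite Ht; apply orb_true_r).
  unfold Sn, subst; cbn [fl inp outp tr pl Ch].
  split; atoms H0fl H0in H0out; try congruence; dec.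
Qed.

Lemma flS_B N0 B k j : inner N0 B -> j < k -> forall x,
  fl (Sn N0 B k) x (B+2*k+S j) = (x =? B+j) /\
  fl (Sn N0 B k) (B+2*k+S j) x = ((x =? B+S j) || inp N0 x).
Proof.
  intros [H0fl [H0in [H0out H0n]]] Hj x.
  unfold Sn, subst; cbn [fl inp outp tr pl Ch].
  split; atoms H0fl H0in H0out; dec.
Qed.

Lemma flS_C N0 B k j : inner N0 B -> k <= j -> j < 2*k -> forall x,
  fl (Sn N0 B k) x (B+2*k+S j) = ((x =? B+j) || outp N0 x) /\
  fl (Sn N0 B k) (B+2*k+S j) x = (x =? B+S j).
Proof.
  intros [H0fl [H0in [H0out H0n]]] Hj Hj2 x.
  unfold Sn, subst; cbn [fl inp outp tr pl Ch].
  split; atoms H0fl H0in H0out; dec.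
Qed.


Definition tokc B j : marking := fun x => if x =? B+j then 1 else 0.

Lemma fire_eq N1 N2 t m : (forall x, fl N1 x t = fl N2 x t /\ fl N1 t x = fl N2 t x) ->
  fire N1 t m = fire N2 t m.
Proof.
  intro H; apply functional_extensionality; intro x; unfold fire.
  destruct (H x) as [-> ->]; auto.
Qed.

Lemma trS N0 B k t : tr (Sn N0 B k) t = true ->
  tr N0 t = true \/ exists i, t = B+2*k+S i /\ i < 2*k.
Proof.
  unfold Sn, subst; cbn [tr Ch]. intro H. destruct (tr N0 t); auto. right.
  rewrite orb_false_r in H. dec. exists (t - B - 2*k - 1); lia.
Qed.

Lemma reach_lift N0 B k m1 m2 : inner N0 B -> reach N0 m1 m2 -> reach (Sn N0 B k) m1 m2.
Proof.
  intros Hi; induction 1.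
  - destruct H as [t [[Ht Hp] ->]]. apply rt_step. exists t; split.
    + split. unfold Sn, subst; cbn [tr]; rewrite Ht; apply orb_true_r.
      intros p Hf. apply Hp. rewrite <- (proj1 (flS_N0 N0 B k t Hi Ht p)); auto.
    + symmetry; apply fire_eq. apply flS_N0; auto.
  - apply rt_refl.
  - eapply rt_trans; eauto.
Qed.

Lemma runB N0 B k j : inner N0 B -> j <= k ->
  reach (Sn N0 B k) (madd (tokc B 0) (mscale 0 (inp N0))) (madd (tokc B j) (mscale j (inp N0))).
Proof.
  intros Hi; induction j; intro Hj. apply rt_refl.
  eapply rt_trans. apply IHj; lia. apply rt_step.
  exists (B+2*k+S j). split. split.
  - unfold Sn, subst; cbn [tr Ch]. dec.
  - intros p Hp. rewrite (proj1 (flS_B N0 B k j Hi ltac:(lia) p)) in Hp.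
    apply Nat.eqb_eq in Hp; subst. unfold madd, tokc. dec.
  - apply functional_extensionality; intro x. unfold fire.
    rewrite (proj1 (flS_B N0 B k j Hi ltac:(lia) x)), (proj2 (flS_B N0 B k j Hi ltac:(lia) x)).
    destruct Hi as [_ [H0in _]]. unfold madd, tokc, mscale.
    destruct (inp N0 x) eqn:E; [apply H0in in E; destruct E|]; dec.
Qed.

Lemma runC N0 B k n : inner N0 B -> forall j R, k <= j -> j + n <= 2*k ->
  reach (Sn N0 B k) (madd (tokc B j) (madd (mscale n (outp N0)) R)) (madd (tokc B (j+n)) R).
Proof.
  intros Hi; induction n; intros j R Hj Hjn.
  - replace (j+0) with j by lia. replace (madd (mscale 0 (outp N0)) R) with R. apply rt_refl.
    apply functional_extensionality; intro x; unfold madd, mscale; destruct (outp N0 x); lia.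
  - eapply rt_trans; [|replace (j + S n) with (S j + n) by lia; apply IHn; lia].
    apply rt_step. exists (B+2*k+S j). split. split.
    + unfold Sn, subst; cbn [tr Ch]. dec.
    + intros p Hp. rewrite (proj1 (flS_C N0 B k j Hi ltac:(lia) ltac:(lia) p)) in Hp.
      unfold madd, tokc, mscale. apply orb_true_iff in Hp as [Hp|Hp].
      * apply Nat.eqb_eq in Hp; subst. dec.
      * rewrite Hp. lia.
    + apply functional_extensionality; intro x. unfold fire.
      rewrite (proj1 (flS_C N0 B k j Hi ltac:(lia) ltac:(lia) x)), (proj2 (flS_C N0 B k j Hi ltac:(lia) ltac:(lia) x)).
      destruct Hi as [_ [_ [H0out _]]]. unfold madd, tokc, mscale.
      destruct (outp N0 x) eqn:E; [apply H0out in E; destruct E|]; dec.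
Qed.


Lemma claim N0 B k : inner N0 B -> 1 <= k -> forall X Y,
  clos_refl_trans_1n marking (step (Sn N0 B k)) X Y ->
  forall j m, X = madd (tokc B j) m -> (forall x, B <= x -> m x = 0) -> k <= j -> j <= 2*k ->
  Y = mscale 1 (outp (Sn N0 B k)) -> reach N0 m (mscale (2*k - j) (outp N0)).
Proof.
  intros Hi Hk X Y H. induction H as [X|X X1 Y Hs Hr IH]; intros j m EX Hm Hj1 Hj2 EY.
  - subst. assert (Ej : j = 2*k).
    { apply (f_equal (fun f => f (B+j))) in EY. unfold madd, tokc, mscale, Sn, subst in EY.
      cbn [outp Ch] in EY. rewrite (Hm (B+j)) in EY by lia. dec. }
    subst j. replace (2*k - 2*k) with 0 by lia.
    replace m with (mscale 0 (outp N0)). apply rt_refl.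
    apply functional_extensionality; intro x.
    apply (f_equal (fun f => f x)) in EY. unfold madd, tokc, mscale, Sn, subst in *.
    cbn [outp Ch] in EY. destruct (outp N0 x); dec.
  - destruct Hs as [t [[Ht Hp] EX1]]. subst X.
    destruct (trS N0 B k t Ht) as [Ht0|[i [Eti Hi2]]].
    + pose proof Hi as [H0fl _].
      assert (Hf : fire (Sn N0 B k) t (madd (tokc B j) m) = madd (tokc B j) (fire N0 t m)).
      { rewrite (fire_eq _ N0) by (apply flS_N0; auto).
        apply functional_extensionality; intro x. unfold fire, madd, tokc.
        destruct (fl N0 x t) eqn:E1; try apply H0fl in E1;
        destruct (fl N0 t x) eqn:E2; try apply H0fl in E2; dec. }
      eapply rt_trans. apply rt_step. exists t; split; [|reflexivity].
      * split; auto. intros p Hf0.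
        pose proof (H0fl _ _ Hf0) as [Hp1 _].
        specialize (Hp p). rewrite (proj1 (flS_N0 N0 B k t Hi Ht0 p)) in Hp.
        specialize (Hp Hf0). unfold madd, tokc in Hp. dec.
      * apply (IH j (fire N0 t m)); auto. congruence.
        intros x Hx. unfold fire. rewrite (Hm x Hx).
        destruct (fl N0 x t) eqn:E1; try (apply H0fl in E1; lia);
        destruct (fl N0 t x) eqn:E2; try (apply H0fl in E2; lia); lia.
    + subst t.
      assert (Eij : i = j).
      { assert (Hfl : fl (Sn N0 B k) (B+i) (B+2*k+S i) = true).
        { destruct (Nat.lt_ge_cases i k).
          - rewrite (proj1 (flS_B N0 B k i Hi H (B+i))). dec.
          - rewrite (proj1 (flS_C N0 B k i Hi H Hi2 (B+i))). dec. }
        specialize (Hp _ Hfl). unfold madd, tokc in Hp. rewrite (Hm (B+i)) in Hp by lia. dec. }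
      subst i.
      pose proof Hi as [_ [_ [H0out _]]].
      set (m2 := fun x => m x - (if outp N0 x then 1 else 0)).
      assert (Hout : forall x, outp N0 x = true -> 1 <= m x).
      { intros x Ex. pose proof (H0out x Ex) as [xB _].
        assert (fl (Sn N0 B k) x (B+2*k+S j) = true).
        { rewrite (proj1 (flS_C N0 B k j Hi Hj1 Hi2 x)), Ex. apply orb_true_r. }
        specialize (Hp _ H). unfold madd, tokc in Hp. dec. }
      assert (Em : m = madd m2 (mscale 1 (outp N0))).
      { apply functional_extensionality; intro x. unfold m2, madd, mscale.
        destruct (outp N0 x) eqn:E; [specialize (Hout x E)|]; lia. }
      replace (mscale (2*k-j) (outp N0)) with (madd (mscale (2*k - S j) (outp N0)) (mscale 1 (outp N0))).
      rewrite Em. apply reach_madd. apply (IH (S j)); auto; try lia.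
      * rewrite EX1. apply functional_extensionality; intro x. unfold fire.
        rewrite (proj1 (flS_C N0 B k j Hi Hj1 Hi2 x)), (proj2 (flS_C N0 B k j Hi Hj1 Hi2 x)).
        unfold m2, madd, tokc.
        destruct (outp N0 x) eqn:E; [pose proof (H0out x E) as [xB _]; specialize (Hout x E)|]; dec.
      * intros x Hx. unfold m2. rewrite (Hm x Hx). lia.
      * apply functional_extensionality; intro x. unfold madd, mscale. destruct (outp N0 x); lia.
Qed.


Lemma zero_reach N m1 m2 : pWF N -> reach N m1 m2 -> (forall x, m1 x = 0) -> forall x, m2 x = 0.
Proof.
  intros HW. induction 1; intros Z0; auto.
  destruct H as [t [[Ht Hp] ->]]. exfalso.
  destruct HW as [_ [Hd [_ [Hi [_ [_ [_ [Hr _]]]]]]]].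
  destruct (Hr t) as [i [Ei Rit]]. unfold node; rewrite Ht; apply orb_true_r.
  apply clos_rt_rtn1 in Rit. inversion Rit; subst.
  - apply (Hd t); split; auto.
  - specialize (Hp y H). rewrite Z0 in Hp. lia.
Qed.

Lemma hi_reach N0 B m1 m2 : inner N0 B -> reach N0 m1 m2 ->
  (forall x, B <= x -> m1 x = 0) -> forall x, B <= x -> m2 x = 0.
Proof.
  intros [H0fl _]. induction 1; intros Z0; auto.
  destruct H as [t [[Ht Hp] ->]]. intros z Hz. unfold fire. rewrite (Z0 z Hz).
  destruct (fl N0 z t) eqn:E1; try (apply H0fl in E1; lia);
  destruct (fl N0 t z) eqn:E2; try (apply H0fl in E2; lia); lia.
Qed.

Theorem mainTheorem5 :
  ~ exists C : net -> Prop,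
      (forall N, C N -> pWF N) /\
      (forall N, pWF N -> subsound N -> C N) /\
      (exists N, C N /\ ~ subsound N) /\
      (forall N, C N -> ksound 1 N) /\
      (forall N M p, C N -> C M -> disjoint_nodes N M -> pl N p = true ->
                     C (subst N p M)).
Proof.
  intros [C [H1 [H2 [[N0 [HC0 Hns]] [H4 H5]]]]].
  pose proof (H1 N0 HC0) as HW.
  destruct (pWF_inner N0 HW) as [B Hi].
  unfold subsound in Hns.
  apply not_all_ex_not in Hns as [k Hns].
  apply not_all_ex_not in Hns as [k' Hns].
  apply not_all_ex_not in Hns as [m' Hns].
  apply imply_to_and in Hns as [Hle Hns].
  apply imply_to_and in Hns as [Hr Hnr].
  destruct (Nat.eq_dec k 0) as [Ek|Hk].
  - subst k. assert (k' = 0) by lia. subst k'. apply Hnr.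
    assert (Z := zero_reach N0 _ _ HW Hr). 
    replace m' with (mscale (0-0) (outp N0)). apply rt_refl.
    apply functional_extensionality; intro x. specialize (Z ltac:(intro y; unfold mscale; destruct (inp N0 y); auto) x).
    unfold madd, mscale in *. destruct (outp N0 x); lia.
  - assert (Hk1 : 1 <= k) by lia.
    assert (HCh : C (Ch B k)) by (apply H2; [apply Ch_pWF|apply Ch_subsound]; auto).
    assert (HS : C (Sn N0 B k)).
    { apply H5; auto.
      - intros x [A1 A2]. destruct Hi as [_ [_ [_ H0n]]]. specialize (H0n x A2).
        unfold node in A1; simpl in A1; dec.
      - simpl; dec. }
    specialize (H4 _ HS (madd (tokc B (k+k')) m')).
    assert (Hm'0 : forall x, B <= x -> m' x = 0).
    { intros x Hx. assert (Z := hi_reach N0 B _ _ Hi Hr).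
      assert (Z0 : forall y, B <= y -> mscale k (inp N0) y = 0).
      { intros y Hy. unfold mscale. destruct (inp N0 y) eqn:E; auto.
        destruct Hi as [_ [H0in _]]. apply H0in in E. lia. }
      specialize (Z Z0 x Hx). unfold madd in Z. lia. }
    assert (Hreach : reach (Sn N0 B k) (mscale 1 (inp (Sn N0 B k))) (madd (tokc B (k+k')) m')).
    { replace (mscale 1 (inp (Sn N0 B k))) with (madd (tokc B 0) (mscale 0 (inp N0))).
      eapply rt_trans. apply (runB N0 B k k Hi); lia.
      eapply rt_trans. apply reach_maddl. apply reach_lift. exact Hi. exact Hr.
      rewrite (madd_comm m'). apply runC; auto; lia.
      apply functional_extensionality; intro x. unfold madd, tokc, mscale, Sn, subst.
      cbn [inp Ch]. destruct (inp N0 x); dec. }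
    specialize (H4 Hreach). apply clos_rt_rt1n in H4.
    apply Hnr. replace (k - k') with (2*k - (k+k')) by lia.
    eapply claim; eauto; lia.
Qed.
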